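(* Let $n\ge 1$ and consider $n$ buckets, where bucket $i$ contains $x_i$ white balls and $y_i$ black balls ($x_i,y_i$ nonnegative integers). Let $A$ be the number of (unordered) pairs of balls lying in the same bucket and having different colors. Consider any procedure that repeatedly selects a bucket and removes from it one white and one black ball, until in every bucket either no balls remain or all remaining balls have the same color, and let $B$ be the number of steps performed. Then $A\ge B^2/n$. *)

(* Defs.v *)
From mathcomp Require Import all_boot all_order all_algebra.
Set Implicit Arguments. Unset Strict Implicit. Unset Printing Implicit Defensive.
Import Order.TTheory GRing.Theory Num.Theory.

(* A configuration of n buckets: x i white balls and y i black balls in bucket i. *)
Definition dec_at (n : nat) (c : 'I_n -> nat) (i : 'I_n) : 'I_n -> nat :=
  fun j => if j == i then (c j).-1 else c j.

(* Running a procedure: s is the sequence of buckets selected at each step. *)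
Fixpoint run (n : nat) (x y : 'I_n -> nat) (s : seq 'I_n)
  : option (('I_n -> nat) * ('I_n -> nat)) :=
  match s with
  | [::] => Some (x, y)
  | i :: s' => if (0 < x i) && (0 < y i)
               then run (dec_at x i) (dec_at y i) s'
               else None
  end.

Definition terminal (n : nat) (x y : 'I_n -> nat) : Prop :=
  forall i : 'I_n, x i = 0%N \/ y i = 0%N.

Definition mixed_pairs (n : nat) (x y : 'I_n -> nat) : nat :=
  (\sum_(i < n) x i * y i)%N.

(* Main.v *)
Require Import Defs.
From mathcomp Require Import all_boot all_order all_algebra.
From mathcomp Require Import zify.
Import Order.TTheory GRing.Theory Num.Theory.
Local Open Scope ring_scope.

Lemma run_count (n : nat) (s : seq 'I_n) : forall (x y : 'I_n -> nat) xf yf,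
  run x y s = Some (xf, yf) -> forall i, (count_mem i s <= x i)%N /\ (count_mem i s <= y i)%N.
Proof.
elim: s => [|a s IH] x y xf yf //=.
case: ifP => // /andP[hx hy] /IH H i.
have [h1 h2] := H i.
move: h1 h2; rewrite /dec_at; case: (eqVneq i a) => [->|ne]; rewrite ?eqxx /=.
  move=> h1 h2; split; lia.
by rewrite add0n; split.
Qed.

Lemma size_count (n : nat) (s : seq 'I_n) : size s = (\sum_(i < n) count_mem i s)%N.
Proof.
elim: s => [|a s IH] /=; first by rewrite big1.
rewrite big_split /= -IH (bigD1 a) //= eqxx big1 ?addn0 // => i /negbTE.
by rewrite eq_sym => ->.
Qed.

Lemma cs (n : nat) (c : 'I_n -> nat) :
  ((\sum_(i < n) c i) ^ 2 <= n * \sum_(i < n) c i ^ 2)%N.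
Proof.
rewrite -(leq_pmul2l (isT : 0 < 2)%N).
have E1 : ((\sum_(i < n) c i) ^ 2 = \sum_(i < n) \sum_(j < n) c i * c j)%N.
  rewrite expnS expn1 big_distrl /=; apply: eq_bigr => i _.
  by rewrite big_distrr.
have E2 : (2 * (n * \sum_(i < n) c i ^ 2) =
   \sum_(i < n) \sum_(j < n) (c i ^ 2 + c j ^ 2))%N.
  under [in RHS]eq_bigr => i _ do rewrite big_split /=.
  rewrite big_split /=.
  have -> : (\sum_(i < n) \sum_(j < n) c i ^ 2 = n * \sum_(i < n) c i ^ 2)%N.
    rewrite big_distrr /=; apply: eq_bigr => i _.
    by rewrite sum_nat_const card_ord.
  by rewrite sum_nat_const card_ord mul2n addnn.
rewrite E1 E2 big_distrr /= leq_sum // => i _.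
rewrite big_distrr /= leq_sum // => j _.
exact: leqifP (nat_Cauchy _ _) ||  exact: (nat_Cauchy _ _).1.
Qed.

Theorem lemma2 (n : nat) (hn : (1 <= n)%N) (x y : 'I_n -> nat)
  (s : seq 'I_n) (xf yf : 'I_n -> nat)
  (hrun : run x y s = Some (xf, yf)) (hterm : terminal xf yf) :
  ((size s ^ 2)%N%:R / n%:R : rat) <= (mixed_pairs x y)%:R.
Proof.
have H : (size s ^ 2 <= mixed_pairs x y * n)%N.
  rewrite (@size_count n s) mulnC.
  apply: (leq_trans (@cs n (fun i => count_mem i s))).
  rewrite leq_mul2l /mixed_pairs; apply/orP; right; apply: leq_sum => i _.
  have [h1 h2] := @run_count n s x y xf yf hrun i.
  rewrite expnS expn1; exact: leq_mul.
rewrite ler_pdivrMr ?ltr0n //.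
rewrite -natrM ler_nat; exact: H.
Qed.
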